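(* Let $r\ge 2$ and, for $1\le j\le r$, let $(\alpha^{[j]}_{h})_{h\in\mathbb{N}}$ be sequences of positive reals with $\alpha^{[j]}_h\neq\alpha^{[j]}_\ell$ for $1\le h<\ell<\infty$. In the $r$-type urn model II with these weights, started from $\mathbf{n}=(n_1,\dots,n_r)$ with all $n_j\ge1$, let $\mathbf{X}_{\mathbf{n}}=(X^{[1]}_{\mathbf{n}},\dots,X^{[r-1]}_{\mathbf{n}})$. Then for all $\mathbf{k}=(k_1,\dots,k_{r-1})$ with $1\le k_j\le n_j$, \[ \mathbb{P}\{\mathbf{X}_{\mathbf{n}}=\mathbf{k}\}=\sum_{\ell_1=k_1}^{n_1}\cdots\sum_{\ell_{r-1}=k_{r-1}}^{n_{r-1}}\frac{\Big(\prod_{j=1}^{r-1}\alpha^{[j]}_{k_j}\Big)\prod_{j=1}^{r-1}\big(\alpha^{[j]}_{\ell_j}\big)^{n_j-k_j+n_r-1}}{\prod_{f=1}^{n_r}\Big(\prod_{j=1}^{r-1}\alpha^{[j]}_{\ell_j}+\alpha^{[r]}_f\sum_{g=1}^{r-1}\frac{\prod_{j=1}^{r-1}\alpha^{[j]}_{\ell_j}}{\alpha^{[g]}_{\ell_g}}\Big)\prod_{j=1}^{r-1}\prod_{\substack{h_j=k_j\\ h_j\neq\ell_j}}^{n_j}\big(\alpha^{[j]}_{\ell_j}-\alpha^{[j]}_{h_j}\big)}. \]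
   Context: $r$-type urn model II: the urn contains balls of types $1,\dots,r$, initially $n_j$ balls of type $j$. At each step, if the urn contains $n'_j$ balls of type $j$ ($1\le j\le r$), a ball of type $\ell$ is drawn with probability \[ \frac{(1-\delta_{n'_\ell,0})\prod_{j\neq\ell}(\alpha^{[j]}_{n'_j})^{1-\delta_{n'_j,0}}}{\sum_{h=1}^{r}(1-\delta_{n'_h,0})\prod_{j\neq h}(\alpha^{[j]}_{n'_j})^{1-\delta_{n'_j,0}}} \] ($\delta$ the Kronecker delta) and discarded. The process stops when either all type $r$ balls have been drawn or all balls of types $1,\dots,r-1$ have been drawn. $X^{[j]}_{\mathbf{n}}$ is the number of type $j$ balls in the urn when the process stops. Empty products equal $1$. *)

(* Defs.v *)
(* Types are numbered 1..r (as in the paper); states of the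
   urn are functions  n : nat -> nat  (only the values at 1..r matter).
   Weights: alpha j h = alpha^{[j]}_h. *)
From mathcomp Require Import all_boot all_order all_algebra.
Set Implicit Arguments. Unset Strict Implicit. Unset Printing Implicit Defensive.
Import Order.TTheory GRing.Theory Num.Theory.
Local Open Scope ring_scope.

Section Urn.
Variable R : realFieldType.

Definition urn_stopped (r : nat) (n : nat -> nat) : bool :=
  (n r == 0%N) || all (fun j => n j == 0%N) (iota 1 r.-1).

Definition draw_weight (r : nat) (alpha : nat -> nat -> R) (n : nat -> nat)
    (l : nat) : R :=
  if n l == 0%N then 0
  else \prod_(1 <= j < r.+1 | j != l) (if n j == 0%N then 1 else alpha j (n j)).

Definition draw_prob (r : nat) (alpha : nat -> nat -> R) (n : nat -> nat)
    (l : nat) : R :=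
  draw_weight r alpha n l / \sum_(1 <= h < r.+1) draw_weight r alpha n h.

Definition urn_decr (n : nat -> nat) (l : nat) : nat -> nat :=
  fun j => if j == l then (n j).-1 else n j.

Fixpoint absorb_prob (r : nat) (alpha : nat -> nat -> R) (k : nat -> nat)
    (fuel : nat) (n : nat -> nat) : R :=
  if urn_stopped r n then
    (if all (fun j => n j == k j) (iota 1 r.-1) then 1 else 0)
  else match fuel with
       | 0%N => 0
       | f.+1 => \sum_(1 <= l < r.+1)
                   draw_prob r alpha n l * absorb_prob r alpha k f (urn_decr n l)
       end.

(* P{ X_n = k } where X_n = (X^{[1]}_n, ..., X^{[r-1]}_n); the total number
   of balls is enough fuel since each draw removes one ball. *)
Definition prob_X (r : nat) (alpha : nat -> nat -> R) (n k : nat -> nat) : R :=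
  absorb_prob r alpha k (\sum_(1 <= j < r.+1) n j) n.

(* iterated sum  sum_{l_1 = lo 1}^{hi 1} ... sum_{l_m = lo m}^{hi m} F l,
   where the summation indices are collected in l : nat -> nat
   (l j = l_j for 1 <= j <= m; other values are 0 / irrelevant). *)
Fixpoint msum (m : nat) (lo hi : nat -> nat) (F : (nat -> nat) -> R) : R :=
  match m with
  | 0%N => F (fun _ => 0%N)
  | m'.+1 => \sum_(lo m <= x < (hi m).+1)
               msum m' lo hi (fun l => F (fun j => if j == m then x else l j))
  end.

Definition thm4_term (r : nat) (alpha : nat -> nat -> R) (n k l : nat -> nat) : R :=
  let P := \prod_(1 <= j < r) alpha j (l j) in
  ((\prod_(1 <= j < r) alpha j (k j)) *
     \prod_(1 <= j < r) alpha j (l j) ^+ (n j - k j + n r - 1)%N)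
  / ((\prod_(1 <= f < (n r).+1)
        (P + alpha r f * \sum_(1 <= g < r) P / alpha g (l g))) *
     \prod_(1 <= j < r)
        \prod_(k j <= h < (n j).+1 | h != l j) (alpha j (l j) - alpha j h)).

End Urn.

(* Main.v *)
Require Import Defs.
From mathcomp Require Import all_boot all_order all_algebra.
From mathcomp Require Import zify ring lra.
Set Implicit Arguments. Unset Strict Implicit. Unset Printing Implicit Defensive.
Import Order.TTheory GRing.Theory Num.Theory.
Local Open Scope ring_scope.

Section Msum.
Variable R : realFieldType.
Implicit Types (F G : (nat -> nat) -> R) (lo hi : nat -> nat).

Lemma msum0 m lo hi : msum m lo hi (fun _ => (0:R)) = 0.
Proof. elim: m => [|m IH] //=; by rewrite big1. Qed.

Lemma msumD m lo hi F G :
  msum m lo hi (fun l => F l + G l) = msum m lo hi F + msum m lo hi G.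
Proof.
elim: m F G => [|m IH] F G //=; rewrite -big_split /=.
by apply: eq_bigr => x _; rewrite IH.
Qed.

Lemma msumZ m lo hi (c : R) F :
  msum m lo hi (fun l => c * F l) = c * msum m lo hi F.
Proof.
elim: m F => [|m IH] F //=; rewrite mulr_sumr.
by apply: eq_bigr => x _; rewrite IH.
Qed.

Lemma msum_sum m lo hi (I : seq nat) (F : nat -> (nat -> nat) -> R) :
  msum m lo hi (fun l => \sum_(i <- I) F i l) = \sum_(i <- I) msum m lo hi (F i).
Proof.
elim: m F => [|m IH] F //=.
under eq_bigr do rewrite IH.
by rewrite exchange_big.
Qed.

Definition inbox m lo hi (l : nat -> nat) :=
  forall j, (1 <= j <= m)%N -> (lo j <= l j <= hi j)%N.

Lemma msum_ext m lo hi F G :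
  (forall l, inbox m lo hi l -> F l = G l) -> msum m lo hi F = msum m lo hi G.
Proof.
elim: m F G => [|m IH] F G H /=.
  by apply: H => j; lia.
apply: eq_big_nat => x /andP[hx1 hx2]; apply: IH => l Hl; apply: H => j Hj.
case: eqP => [->|ne]; first by rewrite hx1 -ltnS hx2.
apply: Hl; lia.
Qed.

Lemma msum_hi m lo hi hi' F :
  (forall j, (1 <= j <= m)%N -> hi j = hi' j) -> msum m lo hi F = msum m lo hi' F.
Proof.
elim: m F => [|m IH] F H //=.
rewrite H ?leqnn //; apply: eq_bigr => x _; apply: IH => j Hj; apply: H; lia.
Qed.

Lemma msum_decr m lo hi F l :
  (1 <= l <= m)%N -> (1 <= lo l <= hi l)%N ->
  msum m lo (urn_decr hi l) F =
  msum m lo hi (fun t => if (t l < hi l)%N then F t else 0).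
Proof.
elim: m F => [|m IH] F Hl Hlo; first lia.
rewrite /=.
case: (ltngtP l m.+1) => Hlm; last first.
{ subst l. rewrite /urn_decr (introT eqP (erefl m.+1)).
  have -> : (hi m.+1).-1.+1 = hi m.+1 by lia.
  rewrite [RHS]big_nat_recr /=; last lia.
  rewrite (@msum_ext _ _ _ (fun t => _) (fun _ => 0)); last first.
    by move=> t _; rewrite ltnn.
  rewrite msum0 addr0; apply: eq_big_nat => x Hx.
  rewrite (@msum_ext _ _ _ (fun t => if _ then _ else _) (fun t => F (fun j => if j == m.+1 then x else t j))); last first.
    by move=> t _; case: ifP => //; lia.
  apply: msum_hi => j Hj; rewrite /urn_decr; case: eqP => //; lia. }
{ lia. }
{ have E1 : urn_decr hi l m.+1 = hi m.+1 by rewrite /urn_decr; case: eqP => //; lia.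
  rewrite E1; apply: eq_bigr => x _.
  by rewrite IH //; lia. }
Qed.

Lemma msum_prod m lo hi (f : nat -> nat -> R) :
  msum m lo hi (fun t => \prod_(1 <= j < m.+1) f j (t j)) =
  \prod_(1 <= j < m.+1) \sum_(lo j <= x < (hi j).+1) f j x.
Proof.
elim: m => [|m IH] /=; first by rewrite !big_geq.
rewrite [RHS]big_nat_recr //= mulrC mulr_suml.
apply: eq_bigr => x _.
rewrite (@msum_ext _ _ _ _ (fun t => f m.+1 x * \prod_(1 <= j < m.+1) f j (t j))).
  by rewrite msumZ IH.
move=> t _; rewrite big_nat_recr //= eqxx mulrC; congr (_ * _).
apply: eq_big_nat => j Hj; rewrite (_ : (j == m.+1) = false) //; lia.
Qed.

End Msum.
Section PF.
Variable R : realFieldType.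
Variable a : nat -> R.
Hypothesis Hd : forall h l, (1 <= h)%N -> (1 <= l)%N -> h != l -> a h != a l.

Definition Spf lo hi d := \sum_(lo <= l < hi.+1)
  a l ^+ d / \prod_(lo <= h < hi.+1 | h != l) (a l - a h).

Lemma subr_neq0 h l : (1 <= h)%N -> (1 <= l)%N -> h != l -> a l - a h != 0.
Proof. by move=> h1 l1 hl; rewrite subr_eq0 eq_sym Hd. Qed.

Lemma sum_aux (I : seq nat) (f g : nat -> R) X :
  \sum_(i <- I) (f i - g i) = X -> \sum_(i <- I) f i = \sum_(i <- I) g i + X.
Proof. by move=> <-; rewrite sumrB addrC subrK. Qed.

Lemma prodne0 lo hi l : (1 <= lo)%N -> (1 <= l)%N ->
  \prod_(lo <= h < hi | h != l) (a l - a h) != 0.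
Proof.
move=> H1 H2; rewrite prodf_seq_neq0; apply/allP => h; rewrite mem_index_iota => Hh.
by apply/implyP => hl; apply: subr_neq0 => //; lia.
Qed.

Lemma Spf_recr lo hi d : (1 <= lo)%N -> (lo <= hi)%N ->
  Spf lo hi.+1 d.+1 = a hi.+1 * Spf lo hi.+1 d + Spf lo hi d.
Proof.
move=> H1 H2; rewrite /Spf mulr_sumr; apply: sum_aux.
rewrite big_nat_recr /=; last lia.
rewrite [X in _ + X](_ : _ = 0) ?addr0; last by rewrite exprS mulrA subrr.
apply: eq_big_nat => l Hl.
have -> : \prod_(lo <= h < hi.+2 | h != l) (a l - a h) =
   (\prod_(lo <= h < hi.+1 | h != l) (a l - a h)) * (a l - a hi.+1).
  rewrite big_mkcond big_nat_recr /=; last lia.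
  by rewrite -big_mkcond (_ : (hi.+1 != l) = true) //; lia.
have hc : a l - a hi.+1 != 0 by apply: subr_neq0; lia.
rewrite exprS; field; rewrite hc andbT; apply: prodne0; lia.
Qed.

Lemma Spf_recl lo hi d : (1 <= lo)%N -> (lo < hi)%N ->
  Spf lo hi d.+1 = a lo * Spf lo hi d + Spf lo.+1 hi d.
Proof.
move=> H1 H2; rewrite /Spf mulr_sumr; apply: sum_aux.
rewrite big_ltn /=; last lia.
rewrite [X in X + _](_ : _ = 0) ?add0r; last by rewrite exprS mulrA subrr.
apply: eq_big_nat => l Hl.
have -> : \prod_(lo <= h < hi.+1 | h != l) (a l - a h) =
   (a l - a lo) * (\prod_(lo.+1 <= h < hi.+1 | h != l) (a l - a h)).
  rewrite big_mkcond big_ltn /=; last lia.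
  by rewrite -big_mkcond (_ : (lo != l) = true) //; lia.
have hc : a l - a lo != 0 by apply: subr_neq0; lia.
rewrite exprS; field; rewrite hc andbT; apply: prodne0; lia.
Qed.

Lemma Spf1 lo d : Spf lo lo d = a lo ^+ d.
Proof.
rewrite /Spf big_nat1 big_mkcond big_nat1 eqxx /= invr1 mulr1 //.
Qed.

Lemma Spf0 n : forall lo, (1 <= lo)%N -> (1 <= n)%N -> Spf lo (lo + n) 0 = 0.
Proof.
elim: n => [|n IH] lo H1 Hn; first lia.
have hab : a (lo + n.+1) - a lo != 0 by apply: subr_neq0; lia.
have e1 := @Spf_recr lo (lo + n) 0 H1 (leq_addr _ _).
have e2 := @Spf_recl lo (lo + n.+1) 0 H1 ltac:(lia).
rewrite addnS in e2 hab *.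
suff : (a (lo + n).+1 - a lo) * Spf lo (lo + n).+1 0 = 0.
  by move/eqP; rewrite mulf_eq0 (negbTE hab) /= => /eqP.
case: n IH Hn e1 e2 hab => [|n] IH Hn e1 e2 hab.
  rewrite addn0 !Spf1 in e1 e2 *.
  rewrite !expr0 in e1 e2.
  rewrite mulrBl; apply/eqP; rewrite subr_eq0; apply/eqP.
  by apply: (addIr 1); rewrite -e1 -e2.
rewrite IH // in e1.
have e3 : Spf lo.+1 (lo + n.+1).+1 0 = 0.
  by rewrite -addSn; apply: IH.
rewrite e3 addr0 in e2; rewrite addr0 in e1.
by rewrite mulrBl -e1 -e2 subrr.
Qed.

Lemma Spf_zero d : forall lo hi, (1 <= lo)%N -> (lo + d < hi)%N -> Spf lo hi d = 0.
Proof.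
elim: d => [|d IH] lo hi H1 H2.
  have -> : hi = (lo + (hi - lo))%N by lia.
  apply: Spf0 => //; lia.
case: hi H2 => [|hi] H2; first lia.
rewrite Spf_recr //; last lia.
rewrite IH // ?mulr0 ?add0r; try lia.
by apply: IH => //; lia.
Qed.
End PF.
Section Main.
Variable R : realFieldType.
Variable q : nat.
Hypothesis q1 : (1 <= q)%N.
Variable alpha : nat -> nat -> R.
Variable k : nat -> nat.
Variable N : nat.
Hypothesis HN : (1 <= N)%N.
Hypothesis Hpos : forall j h, (1 <= j <= q.+1)%N -> (1 <= h)%N -> 0 < alpha j h.
Hypothesis Hdist : forall j h l, (1 <= j <= q.+1)%N -> (1 <= h)%N -> (1 <= l)%N ->
  h != l -> alpha j h != alpha j l.
Hypothesis Hk : forall j, (1 <= j <= q)%N -> (1 <= k j)%N.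

Lemma anz j h : (1 <= j <= q.+1)%N -> (1 <= h)%N -> alpha j h != 0.
Proof. by move=> *; rewrite lt0r_neq0 // Hpos. Qed.

Definition cc j m l := alpha j (k j) * alpha j l ^+ (m - k j + N - 1) /
  (alpha j l ^+ N * \prod_(k j <= h < m.+1 | h != l) (alpha j l - alpha j h)).

Lemma cc_sum j m : (1 <= j <= q)%N -> (k j <= m)%N ->
  \sum_(k j <= l < m.+1) cc j m l = (m == k j)%:R.
Proof.
move=> Hj Hm.
have Hd : forall h l, (1 <= h)%N -> (1 <= l)%N -> h != l -> alpha j h != alpha j l.
  by move=> h l *; apply: Hdist => //; lia.
have kj := Hk Hj.
case: (ltngtP (k j) m) => Hkm; last first.
{ subst m; rewrite big_nat1 /cc big_mkcond big_nat1 eqxx /= mulr1 subnn add0n.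
  have a0 := anz (j := j) (h := k j) ltac:(lia) kj.
  case: N HN => [|N'] _ //.
  by rewrite subn1 /= exprS; field; rewrite expf_neq0. }
{ lia. }
{ rewrite (eq_big_nat _ _ (F2 := fun l => alpha j (k j) *
     (alpha j l ^+ (m - k j - 1) / \prod_(k j <= h < m.+1 | h != l) (alpha j l - alpha j h)))).
    rewrite -mulr_sumr; have := @Spf_zero R (alpha j) Hd (m - k j - 1) (k j) m kj ltac:(lia).
    by rewrite /Spf => ->; rewrite mulr0.
  move=> l Hl; rewrite /cc.
  have al := anz (j := j) (h := l) ltac:(lia) ltac:(lia).
  have hp := @prodne0 R (alpha j) Hd (k j) m.+1 l kj ltac:(lia).
  rewrite (_ : (m - k j + N - 1 = (m - k j - 1) + N)%N); last lia.
  rewrite exprD; field; rewrite hp ?andbT ?expf_neq0 //; lia. }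
Qed.

Lemma cc_rec j m l : (1 <= j <= q)%N -> (k j <= l <= m)%N ->
  cc j m.+1 l = cc j m l * (alpha j l / (alpha j l - alpha j m.+1)).
Proof.
move=> Hj Hl.
have Hd : forall h l, (1 <= h)%N -> (1 <= l)%N -> h != l -> alpha j h != alpha j l.
  by move=> h l' *; apply: Hdist => //; lia.
have kj := Hk Hj.
rewrite /cc (_ : (m.+1 - k j + N - 1 = (m - k j + N - 1).+1)%N); last lia.
rewrite big_mkcond big_nat_recr /=; last lia.
rewrite -big_mkcond (_ : (m.+1 != l) = true); last lia.
have al := anz (j := j) (h := l) ltac:(lia) ltac:(lia).
have hc : alpha j l - alpha j m.+1 != 0 by apply: subr_neq0 => //; lia.
have hp := @prodne0 R (alpha j) Hd (k j) m.+1 l kj ltac:(lia).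
rewrite exprS; field; rewrite hc hp ?expf_neq0 //; lia.
Qed.


Definition sinv (t : nat -> nat) := \sum_(1 <= g < q.+1) (alpha g (t g))^-1.
Definition GG mr t := \prod_(1 <= f < mr.+1) (1 + alpha q.+1 f * sinv t)^-1.
Definition Phi (m t : nat -> nat) :=
  (\prod_(1 <= j < q.+1) cc j (m j) (t j)) * GG (m q.+1) t.
Definition TT m := msum q k m (Phi m).

Lemma absorbE fuel m : absorb_prob q.+1 alpha k fuel m =
  if urn_stopped q.+1 m then
    (if all (fun j => m j == k j) (iota 1 q) then 1 else 0)
  else match fuel with
       | 0%N => 0
       | f.+1 => \sum_(1 <= l < q.+2)
                   draw_prob q.+1 alpha m l * absorb_prob q.+1 alpha k f (urn_decr m l)
       end.
Proof. by case: fuel. Qed.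

Lemma absorb_zero fuel : forall m j, (1 <= j <= q)%N -> (m j < k j)%N ->
  absorb_prob q.+1 alpha k fuel m = 0.
Proof.
elim: fuel => [|f IH] m j Hj Hmj; rewrite absorbE.
- have -> : all (fun j => m j == k j) (iota 1 q) = false.
    apply/negbTE/allPn; exists j; first by rewrite mem_iota; lia.
    by rewrite neq_ltn Hmj.
  by case: ifP.
- have -> : all (fun j => m j == k j) (iota 1 q) = false.
    apply/negbTE/allPn; exists j; first by rewrite mem_iota; lia.
    by rewrite neq_ltn Hmj.
  case: ifP => // _; rewrite big1 // => l _.
  rewrite (IH _ j Hj) ?mulr0 //.
  rewrite /urn_decr; case: eqP => _; lia.
Qed.

Lemma iota_uniq' a b : uniq (index_iota a b).
Proof. by rewrite /index_iota iota_uniq. Qed.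

Lemma sum_decr m l : (1 <= l <= q.+1)%N -> (1 <= m l)%N ->
  ((\sum_(1 <= j < q.+2) urn_decr m l j).+1 = \sum_(1 <= j < q.+2) m j)%N.
Proof.
move=> Hl Hm.
have Hin : l \in index_iota 1 q.+2 by rewrite mem_index_iota; lia.
rewrite !(bigD1_seq l Hin (iota_uniq' _ _)) /= /urn_decr eqxx.
have -> : \sum_(i <- index_iota 1 q.+2 | i != l) (if i == l then (m i).-1 else m i)
        = \sum_(i <- index_iota 1 q.+2 | i != l) m i.
  by apply: eq_bigr => i /negbTE ->.
by rewrite -addSn prednK.
Qed.

Lemma draw_prob_val m l : (forall j, (1 <= j <= q.+1)%N -> (1 <= m j)%N) ->
  (1 <= l <= q.+1)%N ->
  draw_prob q.+1 alpha m l =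
  (alpha l (m l))^-1 / \sum_(1 <= h < q.+2) (alpha h (m h))^-1.
Proof.
move=> Hm Hl.
set A := \prod_(1 <= j < q.+2) alpha j (m j).
have A0 : A != 0.
  rewrite prodf_seq_neq0; apply/allP => j; rewrite mem_index_iota => Hj /=.
  apply: anz; [lia | apply: Hm; lia].
have dw : forall l, (1 <= l <= q.+1)%N -> draw_weight q.+1 alpha m l = A * (alpha l (m l))^-1.
  move=> l' Hl'.
  have Hin : l' \in index_iota 1 q.+2 by rewrite mem_index_iota; lia.
  rewrite /draw_weight (_ : (m l' == 0%N) = false); last by have := Hm l' Hl'; lia.
  rewrite /A (bigD1_seq l' Hin (iota_uniq' _ _)) /=. rewrite mulrC mulrA mulVf ?mul1r; last by apply: anz => //; apply: Hm.
  rewrite big_seq_cond [RHS]big_seq_cond; apply: eq_bigr => i /andP[Hi _].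
  rewrite (_ : (m i == 0%N) = false) //.
  move: Hi; rewrite mem_index_iota => Hi; have := Hm i ltac:(lia); lia.
rewrite /draw_prob dw // (eq_big_nat _ _ (F2 := fun h => A * (alpha h (m h))^-1)); last first.
  by move=> h Hh; apply: dw; lia.
rewrite -mulr_sumr invfM mulrACA mulfV // mul1r //.
Qed.

Lemma prod_bool (s : seq nat) (b : nat -> bool) :
  \prod_(j <- s) ((b j)%:R : R) = if all b s then 1 else 0.
Proof.
elim: s => [|x s IH]; rewrite ?big_nil ?big_cons //= IH.
by case: (b x) => /=; rewrite ?mul1r ?mul0r.
Qed.

Lemma main_base fuel m : (forall j, (1 <= j <= q)%N -> (k j <= m j)%N) ->
  m q.+1 = 0%N -> absorb_prob q.+1 alpha k fuel m = TT m.
Proof.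
move=> Hm H0.
rewrite absorbE /urn_stopped H0 eqxx /=.
rewrite /TT (msum_ext (G := fun t => \prod_(1 <= j < q.+1) cc j (m j) (t j))); last first.
  by move=> t _; rewrite /Phi H0 /GG [X in _ * X]big_geq // mulr1.
rewrite (@msum_prod R q k m (fun j x => cc j (m j) x)) (eq_big_nat _ _ (F2 := fun j => ((m j == k j)%:R : R))); last first.
  move=> j Hj; have Hj2 : (1 <= j <= q)%N by lia.
  by rewrite cc_sum // Hm.
by rewrite prod_bool /index_iota subn1.
Qed.

Lemma sinv_ge0 m t : inbox q k m t -> 0 <= sinv t.
Proof.
move=> Ht; rewrite /sinv big_seq sumr_ge0 // => g; rewrite mem_index_iota => Hg.
rewrite invr_ge0 ltW // Hpos //; first lia.
have := Ht g ltac:(lia); have := Hk (j := g) ltac:(lia); lia.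
Qed.

Lemma GG_S p t : GG p.+1 t = GG p t * (1 + alpha q.+1 p.+1 * sinv t)^-1.
Proof. by rewrite /GG big_nat_recr. Qed.

Lemma main_step f m p :
  (forall m', (forall j, (1 <= j <= q)%N -> (k j <= m' j)%N) ->
     (\sum_(1 <= j < q.+2) m' j <= f)%N -> absorb_prob q.+1 alpha k f m' = TT m') ->
  (forall j, (1 <= j <= q)%N -> (k j <= m j)%N) ->
  (\sum_(1 <= j < q.+2) m j <= f.+1)%N -> m q.+1 = p.+1 ->
  absorb_prob q.+1 alpha k f.+1 m = TT m.
Proof.
move=> IH Hm Hs Hp.
have Hm1 : forall j, (1 <= j <= q.+1)%N -> (1 <= m j)%N.
  move=> j Hj; have [Hjq|Hjq] : (j <= q)%N \/ j = q.+1 by lia.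
    by have := Hk (j := j) ltac:(lia); have := Hm j ltac:(lia); lia.
  by subst j; rewrite Hp.
rewrite absorbE.
have -> : urn_stopped q.+1 m = false.
  rewrite /urn_stopped Hp /=; apply/negbTE/allPn; exists 1%N; first by rewrite mem_iota; lia.
  by have := Hm1 1%N ltac:(lia); lia.
set B := \sum_(1 <= h < q.+2) (alpha h (m h))^-1.
have Bpos : 0 < B.
  rewrite /B big_nat_recr //=.
  have h1 : 0 <= \sum_(1 <= i < q.+1) (alpha i (m i))^-1.
    rewrite big_seq sumr_ge0 // => g; rewrite mem_index_iota => Hg.
    by rewrite invr_ge0 ltW // Hpos //; [lia | apply: Hm1; lia].
  have h2 : 0 < (alpha q.+1 (m q.+1))^-1.
    by rewrite invr_gt0 Hpos ?Hm1 //; lia.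
  lra.
have Hper : forall l, (1 <= l <= q.+1)%N ->
  (alpha l (m l))^-1 * absorb_prob q.+1 alpha k f (urn_decr m l) =
  msum q k m (fun t => Phi m t * ((alpha l (m l))^-1 -
     (if l == q.+1 then - sinv t else (alpha l (t l))^-1))).
{ move=> l Hl; have Hc : (1 <= l <= q)%N \/ l = q.+1 by lia.
  case: Hc => [Hlq|El]; last first.
  { subst l.
    have H1 : forall j, (1 <= j <= q)%N -> (k j <= urn_decr m q.+1 j)%N.
      by move=> j Hj; rewrite /urn_decr (_ : (j == q.+1) = false) ?Hm //; lia.
    have H2 : (\sum_(1 <= j < q.+2) urn_decr m q.+1 j <= f)%N.
      by have := sum_decr (m := m) (l := q.+1) ltac:(lia) ltac:(rewrite Hp; lia); lia.
    rewrite eqxx (IH _ H1 H2) /TT (@msum_hi R q k _ m); last first.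
      by move=> j Hj; rewrite /urn_decr (_ : (j == q.+1) = false) //; lia.
    rewrite -msumZ; apply: msum_ext => t Ht.
    rewrite /Phi.
    have -> : \prod_(1 <= j < q.+1) cc j (urn_decr m q.+1 j) (t j) =
              \prod_(1 <= j < q.+1) cc j (m j) (t j).
      by apply: eq_big_nat => j Hj; rewrite /urn_decr (_ : (j == q.+1) = false) //; lia.
    rewrite /urn_decr eqxx Hp /= GG_S.
    have s0 := sinv_ge0 Ht.
    have a0 : 0 < alpha q.+1 p.+1 by rewrite Hpos.
    have x0 : 1 + alpha q.+1 p.+1 * sinv t != 0.
      by rewrite lt0r_neq0 //; have := mulr_ge0 (ltW a0) s0; lra.
    have a0' : alpha q.+1 p.+1 != 0 by rewrite lt0r_neq0.
    by field; rewrite a0' x0. }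
  rewrite (_ : (l == q.+1) = false); last lia.
  have Hc2 : m l = k l \/ (k l < m l)%N by have := Hm l Hlq; lia.
  case: Hc2 => [Heq|Hgt].
  { rewrite (@absorb_zero f (urn_decr m l) l); last 2 first.
      lia.
      by rewrite /urn_decr eqxx; have := Hm1 l Hl; lia.
    rewrite mulr0; symmetry; rewrite (msum_ext (G := fun _ => 0)) ?msum0 // => t Ht.
    have := Ht l Hlq; rewrite Heq => Htl.
    by rewrite (_ : t l = k l) ?subrr ?mulr0 //; lia. }
  have H1 : forall j, (1 <= j <= q)%N -> (k j <= urn_decr m l j)%N.
    by move=> j Hj; rewrite /urn_decr; case: eqP => [->|_]; have := Hm j Hj; lia.
  have H2 : (\sum_(1 <= j < q.+2) urn_decr m l j <= f)%N.
    by have := sum_decr (m := m) (l := l) ltac:(lia) (Hm1 l Hl); lia.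
  rewrite (IH _ H1 H2) /TT msum_decr; last 2 first.
    lia.
    by have := Hk Hlq; lia.
  rewrite -msumZ; apply: msum_ext => t Ht.
  have Htl := Ht l Hlq.
  case: ifP => Htl'; last first.
    by rewrite (_ : t l = m l) ?subrr ?mulr0 //; lia.
  have Eg : urn_decr m l q.+1 = m q.+1 by rewrite /urn_decr (_ : (q.+1 == l) = false) //; lia.
  have Hin : l \in index_iota 1 q.+1 by rewrite mem_index_iota; lia.
  rewrite /Phi Eg !(bigD1_seq l Hin (iota_uniq' _ _)) /=.
  have -> : \prod_(i <- index_iota 1 q.+1 | i != l) cc i (urn_decr m l i) (t i) =
            \prod_(i <- index_iota 1 q.+1 | i != l) cc i (m i) (t i).
    by apply: eq_bigr => i /negbTE Hi; rewrite /urn_decr Hi.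
  rewrite /urn_decr eqxx.
  case Eml : (m l) Htl' Htl => [|m'] Htl' Htl; first lia.
  rewrite (cc_rec (j := l) (m := m') (l := t l)) //; last lia.
  have a0 : alpha l (t l) != 0 by apply: anz; [lia | have := Hk Hlq; lia].
  have b0 : alpha l m'.+1 != 0 by apply: anz; lia.
  have ab : alpha l (t l) - alpha l m'.+1 != 0.
    by rewrite subr_eq0; apply: Hdist; try lia; have := Hk Hlq; lia.
  by rewrite /=; field; rewrite a0 b0 ab. }
rewrite (eq_big_nat _ _ (F2 := fun l => B^-1 * ((alpha l (m l))^-1 *
    absorb_prob q.+1 alpha k f (urn_decr m l)))); last first.
  move=> l Hl; rewrite draw_prob_val //.
  rewrite -/B; ring.
rewrite -mulr_sumr (eq_big_nat _ _ (F2 := fun l => msum q k m (fun t => Phi m t *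
   ((alpha l (m l))^-1 - (if l == q.+1 then - sinv t else (alpha l (t l))^-1))))); last first.
  by move=> l Hl; apply: Hper; lia.
rewrite -msum_sum (msum_ext (G := fun t => B * Phi m t)); last first.
  move=> t _; rewrite -mulr_sumr mulrC; congr (_ * _).
  rewrite sumrB [X in _ - X]big_nat_recr //= eqxx.
  have -> : \sum_(1 <= i < q.+1) (if i == q.+1 then - sinv t else (alpha i (t i))^-1) = sinv t.
    by apply: eq_big_nat => i Hi; rewrite (_ : (i == q.+1) = false) //; lia.
  by rewrite subrr subr0.
by rewrite msumZ mulrA mulVf ?mul1r // lt0r_neq0.
Qed.

Lemma main fuel : forall m, (forall j, (1 <= j <= q)%N -> (k j <= m j)%N) ->
  (\sum_(1 <= j < q.+2) m j <= fuel)%N -> absorb_prob q.+1 alpha k fuel m = TT m.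
Proof.
elim: fuel => [|f IH] m Hm Hs.
  apply: main_base => //; rewrite big_nat_recr //= in Hs; lia.
case E: (m q.+1) => [|p]; first by apply: main_base.
exact: (main_step IH Hm Hs E).
Qed.

Lemma Phi_term n t : n q.+1 = N -> Phi n t = thm4_term q.+1 alpha n k t.
Proof.
move=> HnN.
rewrite /Phi /thm4_term HnN; cbv zeta.
set P := \prod_(1 <= j < q.+1) alpha j (t j).
have E1 : \prod_(1 <= f < N.+1) (P + alpha q.+1 f * \sum_(1 <= g < q.+1) P / alpha g (t g))
   = P ^+ N * \prod_(1 <= f < N.+1) (1 + alpha q.+1 f * sinv t).
  rewrite (eq_big_nat _ _ (F2 := fun f => P * (1 + alpha q.+1 f * sinv t))); last first.
    by move=> f _; rewrite /sinv -mulr_sumr; ring.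
  by rewrite big_split /= prodr_const_nat subn1.
rewrite E1 /GG prodfV /cc.
rewrite !big_split /= prodfV !big_split /= prodrXl -/P.
rewrite !invfM; ring.
Qed.

End Main.

Unset Implicit Arguments.

Theorem theorem4 (R : realFieldType) (r : nat) (alpha : nat -> nat -> R)
    (n k : nat -> nat) :
  (2 <= r)%N ->
  (forall j h, (1 <= j <= r)%N -> (1 <= h)%N -> 0 < alpha j h) ->
  (forall j h l, (1 <= j <= r)%N -> (1 <= h)%N -> (h < l)%N ->
     alpha j h != alpha j l) ->
  (forall j, (1 <= j <= r)%N -> (1 <= n j)%N) ->
  (forall j, (1 <= j < r)%N -> (1 <= k j <= n j)%N) ->
  prob_X r alpha n k = msum (r.-1) k n (fun l => thm4_term r alpha n k l).
Proof.
move=> Hr Hpos Hdist Hn Hk.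
case: r Hr Hpos Hdist Hn Hk => [|q] Hr Hpos Hdist Hn Hk; first by [].
have q1 : (1 <= q)%N by [].
have Hd' : forall j h l, (1 <= j <= q.+1)%N -> (1 <= h)%N -> (1 <= l)%N ->
    h != l -> alpha j h != alpha j l.
  move=> j h l Hj Hh Hl hl.
  have [H|H] : (h < l)%N \/ (l < h)%N by lia.
    exact: Hdist.
  by rewrite eq_sym; apply: Hdist.
have Hk' : forall j, (1 <= j <= q)%N -> (1 <= k j)%N.
  by move=> j Hj; have := Hk j ltac:(lia); lia.
have HN : (1 <= n q.+1)%N by apply: Hn; lia.
rewrite /prob_X (@main R q q1 alpha k (n q.+1) HN Hpos Hd' Hk' _ n); last 2 first.
    by move=> j Hj; have := Hk j ltac:(lia); lia.
  by [].
rewrite /TT; apply: msum_ext => t _; exact: Phi_term.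
Qed.
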